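(* Let $m,n\in\mathbb{N}$, $\varepsilon\in\mathbb{R}$, $\bar g=-4\,du\,dv+\bar\rho^2\mathring\gamma_{\mathbb{S}^{n-1}}-\tau^2\mathring\gamma_{\mathbb{S}^{m-1}}$ with $\bar\rho=r+2\varepsilon f$. Define on $\mathfrak{D}=\{f>0\}$ \[ \bar h:=\frac12+\frac{\varepsilon f}{2\bar\rho},\qquad \bar\pi:=\bar\nabla^2f-\bar h\,\bar g,\qquad \bar w:=\frac12\bar\square f-\bar h=\frac{n+m-2}{4}+\frac{(n-2)\varepsilon f}{2\bar\rho}, \] and $T:=\tfrac12 f^{-1/2}(-u\partial_u+v\partial_v)$, $N:=\tfrac12 f^{-1/2}(u\partial_u+v\partial_v)$. Then, with respect to the frame consisting of $T$, $N$, the spatial angular coordinate directions (indices $a,b$) and the temporal angular coordinate directions (indices $C,D$), the nonzero components of $\bar\pi$ are \[ \bar\pi_{TT}=\frac{\varepsilon f}{2\bar\rho},\qquad \bar\pi_{ab}=\frac{\varepsilon f}{2\bar\rho}\bar g_{ab},\qquad \bar\pi_{CD}=-\frac{\varepsilon f}{2\bar\rho}\bar g_{CD},\qquad \bar\pi_{NN}=-\frac{\varepsilon f}{2\bar\rho}. \] Moreover \[ \bar\square\bar w=-\frac{(n-2)\varepsilon}{2\bar\rho}\left[\frac{(n-3)f}{\bar\rho^2}-\frac{(n+m-2)r}{2\bar\rho}\right]. \]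
   Context: On $\mathbb{R}^{m+n}$ with Cartesian coordinates $t\in\mathbb{R}^m$, $x\in\mathbb{R}^n$: $r=|x|$, $\tau=|t|$, $u=\frac12(\tau-r)$, $v=\frac12(\tau+r)$, $f=-uv=\frac14(|x|^2-|t|^2)$. On $\{\tau\ne0,r\ne0\}$ one uses coordinates $(u,v,\omega_x,\omega_t)$ with $\omega_x\in\mathbb{S}^{n-1}$, $\omega_t\in\mathbb{S}^{m-1}$; $\partial_u,\partial_v$ are the coordinate vector fields; $a,b$ index local coordinates on $\mathbb{S}^{n-1}$ and $C,D$ local coordinates on $\mathbb{S}^{m-1}$; $\mathring\gamma$ denotes unit round metrics. $\bar\nabla$ is the Levi-Civita connection of $\bar g$, $\bar\nabla^2f$ the Hessian, $\bar\square=\bar g^{\alpha\beta}\bar\nabla_{\alpha\beta}$. *)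

(* Defs.v *)
From Stdlib Require Import Reals.
From Coquelicot Require Import Coquelicot.
From mathcomp Require Import all_boot all_order all_algebra.
From mathcomp Require Import Rstruct.
Set Implicit Arguments. Unset Strict Implicit. Unset Printing Implicit Defensive.
Import Order.TTheory GRing.Theory Num.Theory.
Local Open Scope ring_scope.

Definition upd (N : nat) (x : 'I_N -> R) (i : 'I_N) (t : R) : 'I_N -> R :=
  fun k => if k == i then t else x k.

Definition pder (N : nat) (i : 'I_N) (F : ('I_N -> R) -> R) (x : 'I_N -> R) : R :=
  Derive (fun t => F (upd x i t)) (x i).

Definition metric (N : nat) := ('I_N -> R) -> 'I_N -> 'I_N -> R.

Definition ginv (N : nat) (g : metric N) (x : 'I_N -> R) : 'M[R]_N :=
  invmx (\matrix_(i, j) g x i j).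

Definition christoffel (N : nat) (g : metric N) (x : 'I_N -> R) (k i j : 'I_N) : R :=
  2^-1 * \sum_(l < N) ginv g x k l *
     (pder i (fun y => g y j l) x + pder j (fun y => g y i l) x
      - pder l (fun y => g y i j) x).

Definition hess (N : nat) (g : metric N) (F : ('I_N -> R) -> R) (x : 'I_N -> R)
  (i j : 'I_N) : R :=
  pder i (pder j F) x - \sum_(k < N) christoffel g x k i j * pder k F x.

Definition box (N : nat) (g : metric N) (F : ('I_N -> R) -> R) (x : 'I_N -> R) : R :=
  \sum_(i < N) \sum_(j < N) ginv g x i j * hess g F x i j.

Definition bil (N : nat) (B : 'I_N -> 'I_N -> R) (X Y : 'I_N -> R) : R :=
  \sum_(i < N) \sum_(j < N) B i j * X i * Y j.

Definition cvec (N : nat) (i : 'I_N) : 'I_N -> R := fun k => if k == i then 1 else 0.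

(* Coordinates (u, v, y_1..y_{n-1}, z_1..z_{m-1}) where y (resp. z) are
   stereographic coordinates on S^{n-1} (resp. S^{m-1}), in which the unit
   round metric is 4 |dy|^2 / (1 + |y|^2)^2.  Index layout in 'I_N with
   N = (n-1)+(m-1)+2 :  0 = u, 1 = v, 2 <= i < n+1 : y_{i-2},
   n+1 <= i : z_{i-n-1}. *)

Definition dimN (n m : nat) : nat := (n.-1 + m.-1).+2.

Definition isY (n m : nat) (i : 'I_(dimN n m)) : bool := (2 <= i < n.-1 + 2)%N.
Definition isZ (n m : nat) (i : 'I_(dimN n m)) : bool := (n.-1 + 2 <= i)%N.

Definition ucoord (n m : nat) (x : 'I_(dimN n m) -> R) : R := x (inord 0).
Definition vcoord (n m : nat) (x : 'I_(dimN n m) -> R) : R := x (inord 1).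

Definition rfun (n m : nat) (x : 'I_(dimN n m) -> R) : R := vcoord x - ucoord x.
Definition taufun (n m : nat) (x : 'I_(dimN n m) -> R) : R := vcoord x + ucoord x.
(* f = - u v = (|x|^2 - |t|^2)/4 *)
Definition ffun (n m : nat) (x : 'I_(dimN n m) -> R) : R := - (ucoord x * vcoord x).

Definition rhobar (n m : nat) (eps : R) (x : 'I_(dimN n m) -> R) : R :=
  rfun x + 2 * eps * ffun x.

Definition ynorm2 (n m : nat) (x : 'I_(dimN n m) -> R) : R :=
  \sum_(i < dimN n m | isY i) x i ^+ 2.
Definition znorm2 (n m : nat) (x : 'I_(dimN n m) -> R) : R :=
  \sum_(i < dimN n m | isZ i) x i ^+ 2.

(* gbar = -4 du dv + rhobar^2 gamma_{S^{n-1}} - tau^2 gamma_{S^{m-1}} *)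
Definition gbar (n m : nat) (eps : R) : metric (dimN n m) :=
  fun x i j =>
    if ((nat_of_ord i == 0)%N && (nat_of_ord j == 1)%N) || ((nat_of_ord i == 1)%N && (nat_of_ord j == 0)%N)
    then -2
    else if (i == j) && isY i then rhobar eps x ^+ 2 * (4 / (1 + ynorm2 x) ^+ 2)
    else if (i == j) && isZ i then - (taufun x ^+ 2 * (4 / (1 + znorm2 x) ^+ 2))
    else 0.
Arguments gbar : clear implicits.

Definition hbar (n m : nat) (eps : R) (x : 'I_(dimN n m) -> R) : R :=
  2^-1 + eps * ffun x / (2 * rhobar eps x).

Definition pibar (n m : nat) (eps : R) (x : 'I_(dimN n m) -> R) (i j : 'I_(dimN n m)) : R :=
  hess (gbar n m eps) (@ffun n m) x i j - hbar eps x * gbar n m eps x i j.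

Definition wbar (n m : nat) (eps : R) (x : 'I_(dimN n m) -> R) : R :=
  2^-1 * box (gbar n m eps) (@ffun n m) x - hbar eps x.

Definition Tvec (n m : nat) (x : 'I_(dimN n m) -> R) : 'I_(dimN n m) -> R :=
  fun k => if (nat_of_ord k == 0)%N then - ucoord x / (2 * sqrt (ffun x))
           else if (nat_of_ord k == 1)%N then vcoord x / (2 * sqrt (ffun x)) else 0.
Definition Nvec (n m : nat) (x : 'I_(dimN n m) -> R) : 'I_(dimN n m) -> R :=
  fun k => if (nat_of_ord k == 0)%N then ucoord x / (2 * sqrt (ffun x))
           else if (nat_of_ord k == 1)%N then vcoord x / (2 * sqrt (ffun x)) else 0.

(* Main.v *)
Require Import Defs.
From Stdlib Require Import Reals.
From Coquelicot Require Import Coquelicot.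
From mathcomp Require Import all_boot all_order all_algebra.
From mathcomp Require Import Rstruct.
From mathcomp Require Import ring lra zify.
Import Order.TTheory GRing.Theory Num.Theory.
Local Open Scope ring_scope.
Set Implicit Arguments. Unset Strict Implicit.
Lemma dR_const (c t0 : R) : is_derive (fun _ : R => c) t0 0.
Proof. exact: (@is_derive_const R_AbsRing R_NormedModule c t0). Qed.
Lemma dR_eq (f : R -> R) t0 l l' : is_derive f t0 l -> l = l' -> is_derive f t0 l'.
Proof. by move=> H <-. Qed.
Lemma dR_ext (f g : R -> R) t0 l : (forall t, f t = g t) -> is_derive f t0 l -> is_derive g t0 l.
Proof. move=> H; exact: is_derive_ext. Qed.
Lemma dR_inv (g : R -> R) t0 dg : is_derive g t0 dg -> g t0 != 0 ->
  is_derive (fun t : R => (g t)^-1) t0 (- dg / (g t0) ^+ 2).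
Proof.
move=> H1 /eqP H2.
have := @is_derive_div (fun _ => 1%R) g t0 0 dg (dR_const 1 t0) H1 H2.
move/dR_ext => /(_ (fun t => (g t)^-1)) H; apply: dR_eq; first apply: H.
  by move=> t; rewrite /Rdiv; change (1 * (g t)^-1 = (g t)^-1); rewrite mul1r.
rewrite /Rdiv /pow RmultE. change ((0 * g t0 - 1 * dg) * (g t0 * (g t0 * 1))^-1 = - dg / g t0 ^+ 2).
by rewrite expr2 !mulr1 mul0r mul1r sub0r mulNr.
Qed.
Lemma dR_id (t0 : R) : is_derive (fun t : R => t) t0 1.
Proof. exact: (@is_derive_id R_AbsRing t0). Qed.
Lemma dR_add (f g : R -> R) t0 df dg : is_derive f t0 df -> is_derive g t0 dg ->
  is_derive (fun t : R => f t + g t) t0 (df + dg).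
Proof. move=> H1 H2; exact: (@is_derive_plus R_AbsRing R_NormedModule f g t0 df dg H1 H2). Qed.
Lemma dR_mul (f g : R -> R) t0 df dg : is_derive f t0 df -> is_derive g t0 dg ->
  is_derive (fun t : R => f t * g t) t0 (df * g t0 + f t0 * dg).
Proof. move=> H1 H2; exact: (@is_derive_mult R_AbsRing f g t0 df dg H1 H2 Rmult_comm). Qed.

Definition i0 n m : 'I_(dimN n m) := inord 0.
Definition i1 n m : 'I_(dimN n m) := inord 1.
Arguments i0 {n m}. Arguments i1 {n m}.

Lemma eqi0 n m (i : 'I_(dimN n m)) : (i == i0) = (nat_of_ord i == 0%N).
Proof. by rewrite -val_eqE /= inordK. Qed.
Lemma eqi1 n m (i : 'I_(dimN n m)) : (i == i1) = (nat_of_ord i == 1%N).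
Proof. by rewrite -val_eqE /= inordK. Qed.
Lemma i01 n m : (@i0 n m == i1) = false.
Proof. by rewrite eqi1 /i0 inordK. Qed.

Lemma upd_eq N (y : 'I_N -> R) i t : upd y i t i = t.
Proof. by rewrite /upd eqxx. Qed.
Lemma upd_neq N (y : 'I_N -> R) i j t : j != i -> upd y i t j = y j.
Proof. by rewrite /upd => /negbTE ->. Qed.

Lemma ynorm2_upd n m (y : 'I_(dimN n m) -> R) i t : ~~ isY i -> ynorm2 (upd y i t) = ynorm2 y.
Proof.
move=> Hi; apply: eq_bigr => j Hj; rewrite upd_neq //.
by apply: contraNneq Hi => <-.
Qed.
Lemma znorm2_upd n m (y : 'I_(dimN n m) -> R) i t : ~~ isZ i -> znorm2 (upd y i t) = znorm2 y.
Proof.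
move=> Hi; apply: eq_bigr => j Hj; rewrite upd_neq //.
by apply: contraNneq Hi => <-.
Qed.

Definition Sy n m (y : 'I_(dimN n m) -> R) := 4 / (1 + ynorm2 y) ^+ 2.
Definition Sz n m (y : 'I_(dimN n m) -> R) := 4 / (1 + znorm2 y) ^+ 2.

Definition ee n m eps (y : 'I_(dimN n m) -> R) (i : 'I_(dimN n m)) : R :=
  if (i == i0) || (i == i1) then -2
  else if isY i then rhobar eps y ^+ 2 * Sy y
  else - (taufun y ^+ 2 * Sz y).

Definition pp n m (i : 'I_(dimN n m)) : 'I_(dimN n m) :=
  if i == i0 then i1 else if i == i1 then i0 else i.

Lemma gbar_p n m eps y (i j : 'I_(dimN n m)) :
  gbar n m eps y i j = if j == pp i then ee eps y i else 0.
Proof.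
rewrite /gbar /pp /ee /isY /isZ !eqi0 !eqi1 -!val_eqE /=.
case: i => [[|[|i]] Hi] /=; case: j => [[|[|j]] Hj] //=; rewrite ?inordK //.
- by rewrite addn2.
- by rewrite addn2.
rewrite [j.+2 == _]eq_sym; case: eqP => //= _.
by rewrite /Sy /Sz; case: ltnP.
Qed.
Lemma ppK n m : involutive (@pp n m).
Proof.
move=> i; rewrite /pp; case: (i =P i0) => [->|/eqP H0]; first by rewrite eqxx eq_sym i01.
case: (i =P i1) => [->|/eqP H1]; first by rewrite eqxx.
by rewrite (negbTE H0) (negbTE H1).
Qed.
Lemma ee_pp n m eps y (i : 'I_(dimN n m)) : ee eps y (pp i) = ee eps y i.
Proof.
rewrite /ee /pp; case: (i =P i0) => [->|/eqP H0]; first by rewrite eqxx orbT.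
case: (i =P i1) => [->|/eqP H1]; first by rewrite eqxx.
by rewrite (negbTE H0) (negbTE H1).
Qed.
Lemma sum_if1 N (a : 'I_N) (c : R) (F : 'I_N -> R) :
  \sum_(k < N) (if k == a then c else 0) * F k = c * F a.
Proof.
rewrite (bigD1 a) //= eqxx big1 ?addr0 // => k /negbTE ->; exact: mul0r.
Qed.
Lemma sum_if1r N (a : 'I_N) (F : 'I_N -> R) :
  \sum_(k < N) (if k == a then F k else 0) = F a.
Proof.
rewrite (bigD1 a) //= eqxx big1 ?addr0 // => k /negbTE -> //.
Qed.

Definition Ginv n m eps (y : 'I_(dimN n m) -> R) : 'M[R]_(dimN n m) :=
  \matrix_(i, j) (if j == pp i then (ee eps y i)^-1 else 0).

Lemma ginv_gbar n m eps (y : 'I_(dimN n m) -> R) :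
  (forall i, ee eps y i != 0) -> ginv (gbar n m eps) y = Ginv eps y.
Proof.
move=> Hne.
have HM : (\matrix_(i, j) gbar n m eps y i j) *m Ginv eps y = 1%:M.
  apply/matrixP => i j; rewrite !mxE.
  under eq_bigr do rewrite !mxE gbar_p.
  rewrite sum_if1 ppK ee_pp.
  case: (j =P i) => [->|/eqP Hji]; first by rewrite eqxx mulfV.
  by rewrite mulr0 eq_sym (negbTE Hji).
rewrite /ginv.
have [Hu _] := mulmx1_unit HM.
by rewrite -[LHS]mulmx1 -HM mulmxA mulVmx // mul1mx.
Qed.
Lemma dR_lin (a b t0 : R) : is_derive (fun t : R => a * t + b) t0 a.
Proof.
apply: dR_eq; first exact: dR_add (dR_mul (dR_const a t0) (dR_id t0)) (dR_const b t0).
by rewrite mul0r add0r mulr1 addr0.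
Qed.
Lemma dR_sqlin (a b c t0 : R) : is_derive (fun t : R => (a * t + b) ^+ 2 * c) t0 (2 * a * (a * t0 + b) * c).
Proof.
apply: dR_eq.
  apply: (dR_ext (f := fun t => (a * t + b) * (a * t + b) * c)); first by move=> t; rewrite expr2.
  exact: dR_mul (dR_mul (dR_lin a b t0) (dR_lin a b t0)) (dR_const c t0).
rewrite /=; ring.
Qed.

Lemma pder_is N (i : 'I_N) F y l : is_derive (fun t : R => F (upd y i t)) (y i) l -> pder i F y = l.
Proof. exact: is_derive_unique. Qed.
Lemma pder_loc N (i : 'I_N) F y (G : R -> R) l :
  locally (y i) (fun t => G t = F (upd y i t)) -> is_derive G (y i) l -> pder i F y = l.
Proof. move=> Hl HG; apply: pder_is; exact: is_derive_ext_loc Hl HG. Qed.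
Lemma pder_const N (i : 'I_N) F y c : (forall t, F (upd y i t) = c) -> pder i F y = 0.
Proof. move=> H; apply: pder_is; apply: dR_ext (dR_const c _) => t; by rewrite H. Qed.
Lemma pder_ext N (i : 'I_N) F G y : (forall z, F z = G z) -> pder i F y = pder i G y.
Proof. by move=> H; rewrite /pder; apply: Derive_ext => t; rewrite H. Qed.

Lemma u_upd n m (y : 'I_(dimN n m) -> R) i t : ucoord (upd y i t) = if i == i0 then t else ucoord y.
Proof. by rewrite /ucoord /upd -/(@i0 n m) eq_sym. Qed.
Lemma v_upd n m (y : 'I_(dimN n m) -> R) i t : vcoord (upd y i t) = if i == i1 then t else vcoord y.
Proof. by rewrite /vcoord /upd -/(@i1 n m) eq_sym. Qed.
Lemma isY0 n m : isY (@i0 n m) = false. Proof. by rewrite /isY /i0 inordK. Qed.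
Lemma isY1 n m : isY (@i1 n m) = false. Proof. by rewrite /isY /i1 inordK. Qed.
Lemma isZ0 n m : isZ (@i0 n m) = false. Proof. by rewrite /isZ /i0 inordK // addn2. Qed.
Lemma isZ1 n m : isZ (@i1 n m) = false. Proof. by rewrite /isZ /i1 inordK // addn2. Qed.
Lemma isYZ n m (i : 'I_(dimN n m)) : isY i -> isZ i = false.
Proof. by rewrite /isY /isZ => /andP[_]; rewrite ltnNge => /negbTE. Qed.
Lemma isY_ne n m (i : 'I_(dimN n m)) : isY i -> (i == i0) = false /\ (i == i1) = false.
Proof. by move=> H; split; apply/negbTE; apply: contraTneq H => ->; rewrite ?isY0 ?isY1. Qed.
Lemma isZ_ne n m (i : 'I_(dimN n m)) : isZ i -> (i == i0) = false /\ (i == i1) = false.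
Proof. by move=> H; split; apply/negbTE; apply: contraTneq H => ->; rewrite ?isZ0 ?isZ1. Qed.
Lemma classify n m (i : 'I_(dimN n m)) : (i == i0) = false -> (i == i1) = false -> isY i = false -> isZ i.
Proof.
rewrite eqi0 eqi1 /isY /isZ; case: i => [[|[|i]] Hi] //= _ _.
by move/negbT; rewrite -leqNgt.
Qed.
Lemma i10 n m : (@i1 n m == i0) = false. Proof. by rewrite eq_sym i01. Qed.
Lemma pp0 n m : pp (@i0 n m) = i1. Proof. by rewrite /pp eqxx. Qed.
Lemma pp1 n m : pp (@i1 n m) = i0. Proof. by rewrite /pp eqxx i10. Qed.
Lemma ppE n m (i : 'I_(dimN n m)) : (i == i0) = false -> (i == i1) = false -> pp i = i.
Proof. by rewrite /pp => -> ->. Qed.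
Lemma eq_pp n m (i j : 'I_(dimN n m)) : (j == pp i) = (pp j == i).
Proof.
apply/eqP/eqP => [->|<-]; by rewrite ppK.
Qed.

Lemma gbar_i1 n m eps y (j : 'I_(dimN n m)) : gbar n m eps y j i1 = if j == i0 then -2 else 0.
Proof.
rewrite gbar_p eq_sym -(inj_eq (inv_inj (@ppK n m))) ppK pp1.
by case: (j =P i0) => [->|] //; rewrite /ee eqxx.
Qed.
Lemma gbar_i0 n m eps y (j : 'I_(dimN n m)) : gbar n m eps y j i0 = if j == i1 then -2 else 0.
Proof.
rewrite gbar_p eq_sym -(inj_eq (inv_inj (@ppK n m))) ppK pp0.
by case: (j =P i1) => [->|] //; rewrite /ee eqxx orbT.
Qed.

Lemma R2E : IZR (Zpos (xO xH)) = 2%:R :> R.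
Proof. by rewrite IZRposE INRE. Qed.
Lemma rhobarE n m eps (y : 'I_(dimN n m) -> R) :
  rhobar eps y = vcoord y - ucoord y + 2 * eps * (- (ucoord y * vcoord y)).
Proof. by rewrite /rhobar /rfun /ffun R2E. Qed.
Lemma ffunE n m (y : 'I_(dimN n m) -> R) : ffun y = - (ucoord y * vcoord y).
Proof. by []. Qed.
Lemma rfunE n m (y : 'I_(dimN n m) -> R) : rfun y = vcoord y - ucoord y.
Proof. by []. Qed.
Lemma taufunE n m (y : 'I_(dimN n m) -> R) : taufun y = vcoord y + ucoord y.
Proof. by []. Qed.

Definition dvee n m eps (y : 'I_(dimN n m) -> R) (i : 'I_(dimN n m)) : R :=
  if (i == i0) || (i == i1) then 0
  else if isY i then 2 * (1 - 2 * eps * ucoord y) * rhobar eps y * Sy y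
  else - (2 * taufun y * Sz y).
Definition duee n m eps (y : 'I_(dimN n m) -> R) (i : 'I_(dimN n m)) : R :=
  if (i == i0) || (i == i1) then 0
  else if isY i then 2 * (-1 - 2 * eps * vcoord y) * rhobar eps y * Sy y
  else - (2 * taufun y * Sz y).

Lemma dv_ee n m eps y (i : 'I_(dimN n m)) : pder i1 (fun z => ee eps z i) y = dvee eps y i.
Proof.
rewrite /ee /dvee; case: ifP => H01; first exact: pder_const.
case: ifP => HY.
  apply: pder_is; apply: dR_eq.
    pose a := 1 - 2 * eps * ucoord y; pose b := - ucoord y.
    apply: dR_ext (dR_sqlin a b (Sy y) _) => t; rewrite /a /b.
    rewrite /Sy ynorm2_upd ?isY1 // rhobarE u_upd v_upd i10 eqxx; ring.
  change (y i1) with (vcoord y); rewrite rhobarE; ring.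
apply: pder_is; apply: dR_eq.
  pose c := - Sz y; pose o := GRing.one R.
  apply: dR_ext (dR_sqlin o (ucoord y) c _) => t; rewrite /c /o.
  rewrite /Sz znorm2_upd ?isZ1 // taufunE u_upd v_upd i10 eqxx; ring.
rewrite taufunE; change (y i1) with (vcoord y); ring.
Qed.
Lemma du_ee n m eps y (i : 'I_(dimN n m)) : pder i0 (fun z => ee eps z i) y = duee eps y i.
Proof.
rewrite /ee /duee; case: ifP => H01; first exact: pder_const.
case: ifP => HY.
  apply: pder_is; apply: dR_eq.
    pose a := -1 - 2 * eps * vcoord y.
    apply: dR_ext (dR_sqlin a (vcoord y) (Sy y) _) => t; rewrite /a.
    rewrite /Sy ynorm2_upd ?isY0 // rhobarE u_upd v_upd i01 eqxx; ring.
  change (y i0) with (ucoord y); rewrite rhobarE; ring.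
apply: pder_is; apply: dR_eq.
  pose c := - Sz y; pose o := GRing.one R.
  apply: dR_ext (dR_sqlin o (vcoord y) c _) => t; rewrite /c /o.
  rewrite /Sz znorm2_upd ?isZ0 // taufunE u_upd v_upd i01 eqxx; ring.
rewrite taufunE; change (y i0) with (ucoord y); ring.
Qed.

Lemma dv_g n m eps y (i j : 'I_(dimN n m)) :
  pder i1 (fun z => gbar n m eps z i j) y = if j == pp i then dvee eps y i else 0.
Proof.
rewrite (pder_ext _ _ (fun z => gbar_p eps z i j)).
by case: ifP => _; [exact: dv_ee | exact: pder_const].
Qed.
Lemma du_g n m eps y (i j : 'I_(dimN n m)) :
  pder i0 (fun z => gbar n m eps z i j) y = if j == pp i then duee eps y i else 0.
Proof.
rewrite (pder_ext _ _ (fun z => gbar_p eps z i j)).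
by case: ifP => _; [exact: du_ee | exact: pder_const].
Qed.

Lemma christ_gen n m eps y (k i j : 'I_(dimN n m)) : (forall l, ee eps y l != 0) ->
  christoffel (gbar n m eps) y k i j = 2^-1 * (ee eps y k)^-1 *
    (pder i (fun z => gbar n m eps z j (pp k)) y + pder j (fun z => gbar n m eps z i (pp k)) y
     - pder (pp k) (fun z => gbar n m eps z i j) y).
Proof.
move=> Hne; rewrite /christoffel ginv_gbar //.
under eq_bigr do rewrite mxE.
by rewrite sum_if1 ?RmultE ?R2E mulrA.
Qed.

Lemma christ0 n m eps y (i j : 'I_(dimN n m)) : (forall l, ee eps y l != 0) ->
  christoffel (gbar n m eps) y i0 i j = 4^-1 * dvee eps y i * (j == pp i)%:R.
Proof.
move=> Hne; rewrite christ_gen // pp0.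
rewrite (pder_const (c := if j == i0 then -2 else 0)); last by move=> t; rewrite gbar_i1.
rewrite (pder_const (c := if i == i0 then -2 else 0)); last by move=> t; rewrite gbar_i1.
rewrite dv_g /ee eqxx /=.
case: ifP => _; rewrite ?mulr1 ?mulr0.
  by field.
by rewrite !add0r oppr0 mulr0.
Qed.
Lemma christ1 n m eps y (i j : 'I_(dimN n m)) : (forall l, ee eps y l != 0) ->
  christoffel (gbar n m eps) y i1 i j = 4^-1 * duee eps y i * (j == pp i)%:R.
Proof.
move=> Hne; rewrite christ_gen // pp1.
rewrite (pder_const (c := if j == i1 then -2 else 0)); last by move=> t; rewrite gbar_i0.
rewrite (pder_const (c := if i == i1 then -2 else 0)); last by move=> t; rewrite gbar_i0.
rewrite du_g /ee eqxx orbT /=.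
case: ifP => _; rewrite ?mulr1 ?mulr0.
  by field.
by rewrite !add0r oppr0 mulr0.
Qed.

Lemma sum01 n m (h : 'I_(dimN n m) -> R) :
  (forall k, (k == i0) = false -> (k == i1) = false -> h k = 0) ->
  \sum_(k < dimN n m) h k = h i0 + h i1.
Proof.
move=> H; rewrite (bigD1 i0) // (bigD1 i1) /= ?i10 // big1 ?addr0 // => k /andP[H1 H0].
by apply: H; apply/negbTE.
Qed.

Lemma hess_gen n m eps F y (i j : 'I_(dimN n m)) : (forall l, ee eps y l != 0) ->
  (forall k, (k == i0) = false -> (k == i1) = false -> pder k F y = 0) ->
  hess (gbar n m eps) F y i j = pder i (pder j F) y -
   (4^-1 * dvee eps y i * (j == pp i)%:R * pder i0 F y +
    4^-1 * duee eps y i * (j == pp i)%:R * pder i1 F y).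
Proof.
move=> Hne HF; rewrite /hess RminusE sum01.
  by rewrite christ0 // christ1.
by move=> k H0 H1; rewrite HF // mulr0.
Qed.

Lemma ynorm2_ge0 n m (y : 'I_(dimN n m) -> R) : 0 <= ynorm2 y.
Proof. by apply: sumr_ge0 => i _; exact: sqr_ge0. Qed.
Lemma znorm2_ge0 n m (y : 'I_(dimN n m) -> R) : 0 <= znorm2 y.
Proof. by apply: sumr_ge0 => i _; exact: sqr_ge0. Qed.
Lemma Sy_ne0 n m (y : 'I_(dimN n m) -> R) : Sy y != 0.
Proof.
rewrite /Sy mulf_neq0 ?pnatr_eq0 // invr_neq0 // expf_neq0 //.
have H := ynorm2_ge0 y; apply/eqP => E; lra.
Qed.
Lemma Sz_ne0 n m (y : 'I_(dimN n m) -> R) : Sz y != 0.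
Proof.
rewrite /Sz mulf_neq0 ?pnatr_eq0 // invr_neq0 // expf_neq0 //.
have H := znorm2_ge0 y; apply/eqP => E; lra.
Qed.
Lemma ee_ne0 n m eps (y : 'I_(dimN n m) -> R) :
  rhobar eps y != 0 -> taufun y != 0 -> forall l, ee eps y l != 0.
Proof.
move=> Hr Ht l; rewrite /ee; case: ifP => _; first by rewrite oppr_eq0 pnatr_eq0.
case: ifP => _; first by rewrite mulf_neq0 ?expf_neq0 ?Sy_ne0.
by rewrite oppr_eq0 mulf_neq0 ?expf_neq0 ?Sz_ne0.
Qed.

Lemma sum_split n m (h : 'I_(dimN n m) -> R) :
  \sum_(k < dimN n m) h k =
  h i0 + h i1 + (\sum_(k < dimN n m | isY k) h k + \sum_(k < dimN n m | isZ k) h k).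
Proof.
rewrite (bigD1 i0) // (bigD1 i1) /= ?i10 // addrA (bigID (@isY n m)) /=.
congr (_ + (_ + _)); apply: eq_bigl => i.
- case: (boolP (isY i)) => HY; last by rewrite andbF.
  by have [-> ->] := isY_ne HY.
- case: (boolP (isZ i)) => HZ.
    have [-> ->] := isZ_ne HZ; apply/negP => HY; by rewrite (isYZ HY) in HZ.
  case: (boolP (i == i0)) => H0; first by [].
  case: (boolP (i == i1)) => H1; first by rewrite andbF.
  case: (boolP (isY i)) => HY; first by rewrite andbF.
  by rewrite (classify (negbTE H0) (negbTE H1) (negbTE HY)) in HZ.
Qed.

Lemma cardY n m (c : R) : \sum_(k < dimN n m | isY k) c = c *+ n.-1.
Proof.
rewrite big_mkcond /= -(big_mkord xpredT (fun k => if (2 <= k < n.-1 + 2)%N then c else 0)).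
rewrite (big_cat_nat (n := 2)) //=.
rewrite big1_seq ?add0r; last by move=> k; rewrite mem_index_iota => /andP[_ Hk]; case: ifP => //; lia.
rewrite (big_cat_nat (n := n.-1 + 2)) //=; last by rewrite /dimN; lia.
rewrite [X in _ + X]big1_seq ?addr0; last first.
  by move=> k; rewrite mem_index_iota => Hk; case: ifP => //; lia.
rewrite (eq_big_seq (fun _ => c)) ?sumr_const_nat; last first.
  by move=> k; rewrite mem_index_iota => Hk; case: ifP => //; lia.
congr (_ *+ _); lia.
by rewrite addn2.
Qed.
Lemma cardZ n m (c : R) : \sum_(k < dimN n m | isZ k) c = c *+ m.-1.
Proof.
rewrite big_mkcond /= -(big_mkord xpredT (fun k => if (n.-1 + 2 <= k)%N then c else 0)).
rewrite (big_cat_nat (n := n.-1 + 2)) //=; last by rewrite /dimN; lia.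
rewrite big1_seq ?add0r; last by move=> k; rewrite mem_index_iota => Hk; case: ifP => //; lia.
rewrite (eq_big_seq (fun _ => c)) ?sumr_const_nat; last first.
  by move=> k; rewrite mem_index_iota => Hk; case: ifP => //; lia.
congr (_ *+ _); rewrite /dimN; lia.
Qed.

Lemma box_gen n m eps F (y : 'I_(dimN n m) -> R) :
  rhobar eps y != 0 -> taufun y != 0 ->
  (forall k, (k == i0) = false -> (k == i1) = false -> pder k F y = 0) ->
  (forall k, (k == i0) = false -> (k == i1) = false -> pder k (pder k F) y = 0) ->
  box (gbar n m eps) F y =
   - 2^-1 * (pder i0 (pder i1 F) y + pder i1 (pder i0 F) y)
   - (n.-1)%:R * ((1 - 2 * eps * ucoord y) * pder i0 F y + (-1 - 2 * eps * vcoord y) * pder i1 F y)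
       / (2 * rhobar eps y)
   - (m.-1)%:R * (pder i0 F y + pder i1 F y) / (2 * taufun y).
Proof.
move=> Hr Ht HF1 HF2.
have Hne := ee_ne0 Hr Ht.
rewrite /box ginv_gbar //.
under eq_bigr => i _ do (under eq_bigr => j _ do rewrite mxE; rewrite sum_if1).
rewrite sum_split.
have -> : \sum_(k < dimN n m | isY k) (ee eps y k)^-1 * hess (gbar n m eps) F y k (pp k) =
   \sum_(k < dimN n m | isY k) (- ((1 - 2 * eps * ucoord y) * pder i0 F y + (-1 - 2 * eps * vcoord y) * pder i1 F y)
       / (2 * rhobar eps y)).
  apply: eq_bigr => i HY; have [H0 H1] := isY_ne HY.
  rewrite hess_gen // ppE // HF2 // eqxx /ee /dvee /duee H0 H1 HY /=.
  move: Hr (Sy_ne0 y); set r := rhobar eps y; set s := Sy y; set a := pder i0 F y; set b := pder i1 F y.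
  set u := ucoord y; set v := vcoord y => Hr Hs.
  field; by rewrite Hr Hs.
have -> : \sum_(k < dimN n m | isZ k) (ee eps y k)^-1 * hess (gbar n m eps) F y k (pp k) =
   \sum_(k < dimN n m | isZ k) (- (pder i0 F y + pder i1 F y) / (2 * taufun y)).
  apply: eq_bigr => i HZ; have [H0 H1] := isZ_ne HZ.
  have HY : isY i = false by apply/negP => HY; rewrite (isYZ HY) in HZ.
  rewrite hess_gen // ppE // HF2 // eqxx /ee /dvee /duee H0 H1 HY /=.
  move: Ht (Sz_ne0 y); set t := taufun y; set s := Sz y; set a := pder i0 F y; set b := pder i1 F y => Ht Hs.
  field; by rewrite Ht Hs.
rewrite cardY cardZ -[_ *+ n.-1]mulr_natl -[_ *+ m.-1]mulr_natl.
rewrite !hess_gen // pp0 pp1 !eqxx /ee /dvee /duee !eqxx /= ?orbT /=.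
move: Hr Ht; set r := rhobar eps y; set t := taufun y; set a := pder i0 F y; set b := pder i1 F y.
set c := pder i0 (pder i1 F) y; set d := pder i1 (pder i0 F) y.
set u := ucoord y; set v := vcoord y; set N1 := (n.-1)%:R; set M1 := (m.-1)%:R => Hr Ht.
field; by rewrite Hr Ht.
Qed.

Lemma pder_f n m (k : 'I_(dimN n m)) z :
  pder k (@ffun n m) z = if k == i0 then - vcoord z else if k == i1 then - ucoord z else 0.
Proof.
case: ifP => H0.
  rewrite (eqP H0); apply: pder_is; pose a := - vcoord z; pose o := @GRing.zero R.
  by apply: dR_ext (dR_lin a o _) => t; rewrite /a /o ffunE u_upd v_upd eqxx i01; ring.
case: ifP => H1.
  rewrite (eqP H1); apply: pder_is; pose a := - ucoord z; pose o := @GRing.zero R.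
  by apply: dR_ext (dR_lin a o _) => t; rewrite /a /o ffunE u_upd v_upd eqxx i10; ring.
by apply: (pder_const (c := ffun z)) => t; rewrite !ffunE u_upd v_upd H0 H1.
Qed.

Lemma pder_ucoord n m (k : 'I_(dimN n m)) (c : R) z :
  pder k (fun y => c * ucoord y) z = if k == i0 then c else 0.
Proof.
case: ifP => H0.
  rewrite (eqP H0); apply: pder_is; pose o := @GRing.zero R.
  by apply: dR_ext (dR_lin c o _) => t; rewrite /o u_upd eqxx; ring.
by apply: (pder_const (c := c * ucoord z)) => t; rewrite u_upd H0.
Qed.
Lemma pder_vcoord n m (k : 'I_(dimN n m)) (c : R) z :
  pder k (fun y => c * vcoord y) z = if k == i1 then c else 0.
Proof.
case: ifP => H0.
  rewrite (eqP H0); apply: pder_is; pose o := @GRing.zero R.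
  by apply: dR_ext (dR_lin c o _) => t; rewrite /o v_upd eqxx; ring.
by apply: (pder_const (c := c * vcoord z)) => t; rewrite v_upd H0.
Qed.

Lemma d2f_j n m (i j : 'I_(dimN n m)) z : (j == i0) = false -> (j == i1) = false ->
  pder i (pder j (@ffun n m)) z = 0.
Proof.
move=> H0 H1; rewrite (pder_ext _ _ (pder_f j)) H0 H1; exact: (pder_const (c := 0)).
Qed.
Lemma d2f_0 n m (i : 'I_(dimN n m)) z :
  pder i (pder i0 (@ffun n m)) z = if i == i1 then -1 else 0.
Proof.
rewrite (pder_ext _ _ (pder_f i0)) eqxx.
by rewrite (pder_ext _ _ (G := fun y => (-1) * vcoord y)) ?pder_vcoord // => y; ring.
Qed.
Lemma d2f_1 n m (i : 'I_(dimN n m)) z :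
  pder i (pder i1 (@ffun n m)) z = if i == i0 then -1 else 0.
Proof.
rewrite (pder_ext _ _ (pder_f i1)) i10 eqxx.
by rewrite (pder_ext _ _ (G := fun y => (-1) * ucoord y)) ?pder_ucoord // => y; ring.
Qed.

Lemma hbarE n m eps (y : 'I_(dimN n m) -> R) :
  hbar eps y = 2^-1 + eps * ffun y / (2 * rhobar eps y).
Proof. by rewrite /hbar ?R2E. Qed.


Lemma pibar_eq n m eps (x : 'I_(dimN n m) -> R) i j :
  rhobar eps x != 0 -> taufun x != 0 ->
  pibar eps x i j = pder i (pder j (@ffun n m)) x -
    (if j == pp i then 4^-1 * dvee eps x i * (- vcoord x) + 4^-1 * duee eps x i * (- ucoord x)
       + hbar eps x * ee eps x i else 0).
Proof.
move=> Hr Ht; rewrite /pibar hess_gen; first last.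
- by move=> k H0 H1; rewrite pder_f H0 H1.
- exact: ee_ne0.
rewrite gbar_p !pder_f eqxx i10 eqxx.
case: (j == pp i) => /=; rewrite ?RminusE ?RmultE; ring.
Qed.

Lemma P01 n m eps (x : 'I_(dimN n m) -> R) : rhobar eps x != 0 -> taufun x != 0 ->
  pibar eps x i0 i1 = 2 * (eps * ffun x / (2 * rhobar eps x)).
Proof.
move=> Hr Ht; rewrite pibar_eq // pp0 eqxx d2f_1 eqxx /dvee /duee /ee eqxx /= hbarE.
move: Hr; set r := rhobar eps x => Hr; field; by rewrite Hr.
Qed.
Lemma P10 n m eps (x : 'I_(dimN n m) -> R) : rhobar eps x != 0 -> taufun x != 0 ->
  pibar eps x i1 i0 = 2 * (eps * ffun x / (2 * rhobar eps x)).
Proof.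
move=> Hr Ht; rewrite pibar_eq // pp1 eqxx d2f_0 eqxx /dvee /duee /ee eqxx orbT /= hbarE.
move: Hr; set r := rhobar eps x => Hr; field; by rewrite Hr.
Qed.
Lemma P00 n m eps (x : 'I_(dimN n m) -> R) : rhobar eps x != 0 -> taufun x != 0 ->
  pibar eps x i0 i0 = 0.
Proof. by move=> Hr Ht; rewrite pibar_eq // pp0 i01 d2f_0 i01 subrr. Qed.
Lemma P11 n m eps (x : 'I_(dimN n m) -> R) : rhobar eps x != 0 -> taufun x != 0 ->
  pibar eps x i1 i1 = 0.
Proof. by move=> Hr Ht; rewrite pibar_eq // pp1 i10 d2f_1 i10 subrr. Qed.

Lemma PY n m eps (x : 'I_(dimN n m) -> R) a b : rhobar eps x != 0 -> taufun x != 0 ->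
  isY a -> isY b ->
  pibar eps x a b = eps * ffun x / (2 * rhobar eps x) * gbar n m eps x a b.
Proof.
move=> Hr Ht Ha Hb; have [Ha0 Ha1] := isY_ne Ha; have [Hb0 Hb1] := isY_ne Hb.
rewrite pibar_eq // gbar_p ppE // d2f_j //.
case: ifP => _; last by rewrite subrr mulr0.
rewrite /dvee /duee /ee Ha0 Ha1 Ha /= hbarE ffunE.
move: Hr (Sy_ne0 x); rewrite rhobarE; set s := Sy x; set u := ucoord x; set v := vcoord x => Hr Hs.
field; by rewrite Hr.
Qed.
Lemma PZ n m eps (x : 'I_(dimN n m) -> R) a b : rhobar eps x != 0 -> taufun x != 0 ->
  isZ a -> isZ b ->
  pibar eps x a b = - (eps * ffun x / (2 * rhobar eps x)) * gbar n m eps x a b.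
Proof.
move=> Hr Ht Ha Hb; have [Ha0 Ha1] := isZ_ne Ha; have [Hb0 Hb1] := isZ_ne Hb.
have HaY : isY a = false by apply/negP => HY; rewrite (isYZ HY) in Ha.
rewrite pibar_eq // gbar_p ppE // d2f_j //.
case: ifP => _; last by rewrite subrr mulr0.
rewrite /dvee /duee /ee Ha0 Ha1 HaY /= hbarE ffunE.
move: Hr Ht (Sz_ne0 x); rewrite rhobarE taufunE; set s := Sz x; set u := ucoord x; set v := vcoord x => Hr Ht Hs.
field; by rewrite Hr.
Qed.

Lemma Pzero_j n m eps (x : 'I_(dimN n m) -> R) i j : rhobar eps x != 0 -> taufun x != 0 ->
  (j == i0) = false -> (j == i1) = false -> (j == pp i) = false -> pibar eps x i j = 0.
Proof. by move=> Hr Ht H0 H1 Hp; rewrite pibar_eq // Hp d2f_j // subrr. Qed.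
Lemma Pzero_i n m eps (x : 'I_(dimN n m) -> R) i j : rhobar eps x != 0 -> taufun x != 0 ->
  (i == i0) = false -> (i == i1) = false -> (j == pp i) = false -> pibar eps x i j = 0.
Proof.
move=> Hr Ht H0 H1 Hp; rewrite pibar_eq // Hp subr0.
case: (boolP (j == i0)) => [/eqP ->|Hj0]; first by rewrite d2f_0 H1.
case: (boolP (j == i1)) => [/eqP ->|Hj1]; first by rewrite d2f_1 H0.
by rewrite d2f_j // ?(negbTE Hj0) ?(negbTE Hj1).
Qed.

Lemma bil01' n m (B : 'I_(dimN n m) -> 'I_(dimN n m) -> R) X Y :
  (forall k, (k == i0) = false -> (k == i1) = false -> X k = 0) ->
  (forall k, (k == i0) = false -> (k == i1) = false -> Y k = 0) ->
  bil B X Y = B i0 i0 * X i0 * Y i0 + B i0 i1 * X i0 * Y i1 + (B i1 i0 * X i1 * Y i0 + B i1 i1 * X i1 * Y i1).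
Proof.
move=> HX HY; rewrite /bil sum01; last first.
  by move=> k H0 H1; apply: big1 => j _; rewrite HX // mulr0 mul0r.
by rewrite !sum01 // => k H0 H1; rewrite HY // mulr0.
Qed.

Lemma bil_cr N (B : 'I_N -> 'I_N -> R) X c : bil B X (cvec c) = \sum_(i < N) B i c * X i.
Proof.
rewrite /bil; apply: eq_bigr => i _.
rewrite (bigD1 c) //= big1 ?addr0 /cvec ?eqxx ?mulr1 // => j Hj.
by rewrite (negbTE Hj) mulr0.
Qed.
Lemma bil_cl N (B : 'I_N -> 'I_N -> R) Y c : bil B (cvec c) Y = \sum_(j < N) B c j * Y j.
Proof.
rewrite /bil (bigD1 c) //= [X in _ + X]big1 ?addr0 /cvec.
  by apply: eq_bigr => j _; rewrite eqxx mulr1.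
by move=> i Hi; apply: big1 => j _; rewrite (negbTE Hi) mulr0 mul0r.
Qed.

Lemma TvecE n m (x : 'I_(dimN n m) -> R) k : Tvec x k =
  if k == i0 then - ucoord x / (2 * sqrt (ffun x))
  else if k == i1 then vcoord x / (2 * sqrt (ffun x)) else 0.
Proof. by rewrite /Tvec -eqi0 -eqi1. Qed.
Lemma NvecE n m (x : 'I_(dimN n m) -> R) k : Nvec x k =
  if k == i0 then ucoord x / (2 * sqrt (ffun x))
  else if k == i1 then vcoord x / (2 * sqrt (ffun x)) else 0.
Proof. by rewrite /Nvec -eqi0 -eqi1. Qed.

Lemma natr_pred n : (1 <= n)%N -> (n.-1)%:R = n%:R - 1 :> R.
Proof. by move=> Hn; rewrite -[in RHS](prednK Hn) -natr1 addrK. Qed.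

Definition Wf n m eps (y : 'I_(dimN n m) -> R) :=
  (n%:R + m%:R - 2) / 4 + (n%:R - 2) * eps * ffun y / (2 * rhobar eps y).

Lemma wbar_loc n m eps (y : 'I_(dimN n m) -> R) : (1 <= n)%N -> (1 <= m)%N ->
  rhobar eps y != 0 -> taufun y != 0 -> wbar eps y = Wf eps y.
Proof.
move=> Hn Hm Hr Ht; rewrite /wbar ?RminusE ?RmultE ?R2E box_gen //; first last.
- by move=> k H0 H1; rewrite d2f_j.
- by move=> k H0 H1; rewrite pder_f H0 H1.
rewrite d2f_1 d2f_0 !pder_f !eqxx i10 hbarE /Wf !natr_pred //.
move: Hr Ht; rewrite rhobarE taufunE ffunE.
set u := ucoord y; set v := vcoord y; set N := n%:R; set M := m%:R => Hr Ht.
field; by rewrite Hr Ht.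
Qed.

Lemma lin_loc (a b t0 : R) : a * t0 + b != 0 -> locally t0 (fun t => a * t + b != 0).
Proof.
move=> H.
have HD : 0 < `|a * t0 + b| by rewrite normr_gt0.
have HA : 0 <= `|a| := normr_ge0 a.
have Hc : 0 < `|a * t0 + b| / (`|a| + 1) by apply: divr_gt0 => //; lra.
exists (mkposreal _ (RltP Hc)) => t /= Hb.
have Hb' : `|t - t0| < `|a * t0 + b| / (`|a| + 1).
  move: Hb; rewrite /ball /= /AbsRing_ball /abs /minus /plus /opp /=.
  by move/RltP.
apply/eqP => E.
have E2 : `|a * t0 + b| = `|a| * `|t - t0|.
  rewrite -normrM; have -> : a * t0 + b = - (a * (t - t0)) + (a * t + b) by ring.
  by rewrite E addr0 normrN.
set A := `|a| in HA E2 Hc Hb'; set D := `|a * t0 + b| in HD E2 Hc Hb'.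
set e := `|t - t0| in E2 Hb'; set c := D / (A + 1) in Hc Hb'.
have Hcc : c * (A + 1) = D by rewrite /c mulfVK //; apply/eqP => E3; lra.
nra.
Qed.

Lemma dR_frac (p1 p0 q1 q0 t0 : R) : q1 * t0 + q0 != 0 ->
  is_derive (fun t : R => (p1 * t + p0) / (q1 * t + q0)) t0
    ((p1 * (q1 * t0 + q0) - q1 * (p1 * t0 + p0)) / (q1 * t0 + q0) ^+ 2).
Proof.
move=> H; apply: dR_eq; first exact: dR_mul (dR_lin p1 p0 t0) (dR_inv (dR_lin q1 q0 t0) H).
rewrite /=; move: H; set q := q1 * t0 + q0 => H; field; by rewrite H.
Qed.

Lemma dR_frac2 (c q1 q0 t0 : R) : q1 * t0 + q0 != 0 ->
  is_derive (fun t : R => c * t ^+ 2 / (q1 * t + q0) ^+ 2) t0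
    (c * (2 * t0 * (q1 * t0 + q0) - 2 * q1 * t0 ^+ 2) / (q1 * t0 + q0) ^+ 3).
Proof.
move=> H.
have Hn : is_derive (fun t : R => c * t ^+ 2) t0 (c * (2 * t0)).
  apply: dR_eq; first apply: (dR_ext (f := fun t => c * t * t)); first by move=> t; rewrite expr2 mulrA.
    exact: dR_mul (dR_mul (dR_const c t0) (dR_id t0)) (dR_id t0).
  rewrite /=; ring.
have Hd : is_derive (fun t : R => (q1 * t + q0) ^+ 2) t0 (2 * q1 * (q1 * t0 + q0) * 1).
  apply: (dR_ext (f := fun t => (q1 * t + q0) ^+ 2 * 1)); first by move=> t; rewrite mulr1.
  exact: dR_sqlin.
have H2 : (q1 * t0 + q0) ^+ 2 != 0 by rewrite expf_neq0.
apply: dR_eq; first exact: dR_mul Hn (dR_inv Hd H2).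
rewrite /=; move: H; set q := q1 * t0 + q0 => H; field; by rewrite H.
Qed.

Definition Wu n m eps (y : 'I_(dimN n m) -> R) :=
  (n%:R - 2) * eps / 2 * (- vcoord y ^+ 2 / rhobar eps y ^+ 2).
Definition Wv n m eps (y : 'I_(dimN n m) -> R) :=
  (n%:R - 2) * eps / 2 * (ucoord y ^+ 2 / rhobar eps y ^+ 2).

Lemma pder_w_other n m eps (y : 'I_(dimN n m) -> R) k : (1 <= n)%N -> (1 <= m)%N ->
  rhobar eps y != 0 -> taufun y != 0 -> (k == i0) = false -> (k == i1) = false ->
  pder k (@wbar n m eps) y = 0.
Proof.
move=> Hn Hm Hr Ht H0 H1; apply: (pder_const (c := Wf eps y)) => t.
have Er : rhobar eps (upd y k t) = rhobar eps y by rewrite !rhobarE !u_upd !v_upd H0 H1.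
have Et : taufun (upd y k t) = taufun y by rewrite !taufunE !u_upd !v_upd H0 H1.
rewrite wbar_loc ?Er ?Et // /Wf Er !ffunE !u_upd !v_upd H0 H1 //.
Qed.

Lemma pder_w0 n m eps (y : 'I_(dimN n m) -> R) : (1 <= n)%N -> (1 <= m)%N ->
  rhobar eps y != 0 -> taufun y != 0 -> pder i0 (@wbar n m eps) y = Wu eps y.
Proof.
move=> Hn Hm Hr Ht.
pose a := -1 - 2 * eps * vcoord y; pose v := vcoord y; pose o := GRing.one R.
pose K := (n%:R - 2) * eps / 2; pose C0 := ((n%:R : R) + m%:R - 2) / 4; pose mv := - v; pose z := @GRing.zero R.
have Er : forall t, rhobar eps (upd y i0 t) = a * t + v.
  by move=> t; rewrite rhobarE u_upd v_upd eqxx i01 /a /v; ring.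
have Et : forall t, taufun (upd y i0 t) = o * t + v.
  by move=> t; rewrite taufunE u_upd v_upd eqxx i01 /o /v; ring.
have H1 : a * ucoord y + v != 0.
  by move: Hr; rewrite rhobarE /a /v; congr (_ != _); ring.
have H2 : o * ucoord y + v != 0.
  by move: Ht; rewrite taufunE /o /v; congr (_ != _); ring.
eapply (@pder_loc _ i0 (@wbar n m eps) y (fun t : R => C0 + K * ((mv * t + z) / (a * t + v)))).

  apply: filter_imp (filter_and _ _ (lin_loc H1) (lin_loc H2)) => t [Ht1 Ht2].
  rewrite wbar_loc ?Er ?Et // /Wf Er ffunE u_upd v_upd eqxx i01 /C0 /K /mv /z -/v.
  move: Ht1; set q := a * t + v => Ht1; field; by rewrite Ht1.
apply: dR_eq; first exact: dR_add (dR_const C0 _) (dR_mul (dR_const K _) (dR_frac mv z H1)).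
rewrite /Wu /= /mv /z /K /C0 /a /v.
move: H1; rewrite /a /v => H1.
have -> : rhobar eps y = (-1 - 2 * eps * vcoord y) * ucoord y + vcoord y by rewrite rhobarE; ring.
field; by rewrite H1.
Qed.

Lemma pder_w1 n m eps (y : 'I_(dimN n m) -> R) : (1 <= n)%N -> (1 <= m)%N ->
  rhobar eps y != 0 -> taufun y != 0 -> pder i1 (@wbar n m eps) y = Wv eps y.
Proof.
move=> Hn Hm Hr Ht.
pose b := 1 - 2 * eps * ucoord y; pose u := ucoord y; pose o := GRing.one R.
pose K := (n%:R - 2) * eps / 2; pose C0 := ((n%:R : R) + m%:R - 2) / 4; pose mu := - u; pose z := @GRing.zero R.
have Er : forall t, rhobar eps (upd y i1 t) = b * t + mu.
  by move=> t; rewrite rhobarE u_upd v_upd eqxx i10 /b /mu /u; ring.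
have Et : forall t, taufun (upd y i1 t) = o * t + u.
  by move=> t; rewrite taufunE u_upd v_upd eqxx i10 /o /u; ring.
have H1 : b * vcoord y + mu != 0.
  by move: Hr; rewrite rhobarE /b /mu /u; congr (_ != _); ring.
have H2 : o * vcoord y + u != 0.
  by move: Ht; rewrite taufunE /o /u; congr (_ != _); ring.
eapply (@pder_loc _ i1 (@wbar n m eps) y (fun t : R => C0 + K * ((mu * t + z) / (b * t + mu)))).
  apply: filter_imp (filter_and _ _ (lin_loc H1) (lin_loc H2)) => t [Ht1 Ht2].
  rewrite wbar_loc ?Er ?Et // /Wf Er ffunE u_upd v_upd eqxx i10 /C0 /K /mu /z -/u.
  move: Ht1; set q := b * t + mu => Ht1; field; by rewrite Ht1.
apply: dR_eq; first exact: dR_add (dR_const C0 _) (dR_mul (dR_const K _) (dR_frac mu z H1)).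
rewrite /Wv /= /mu /z /K /C0 /b /u.
move: H1; rewrite /b /mu /u => H1.
have -> : rhobar eps y = (1 - 2 * eps * ucoord y) * vcoord y + - ucoord y by rewrite rhobarE; ring.
field; by rewrite H1.
Qed.

Lemma d2w10 n m eps (y : 'I_(dimN n m) -> R) : (1 <= n)%N -> (1 <= m)%N ->
  rhobar eps y != 0 -> taufun y != 0 ->
  pder i1 (pder i0 (@wbar n m eps)) y =
  (n%:R - 2) * eps / 2 * ((-1) * (2 * vcoord y * ((1 - 2 * eps * ucoord y) * vcoord y + - ucoord y)
     - 2 * (1 - 2 * eps * ucoord y) * vcoord y ^+ 2) / ((1 - 2 * eps * ucoord y) * vcoord y + - ucoord y) ^+ 3).
Proof.
move=> Hn Hm Hr Ht.
pose b := 1 - 2 * eps * ucoord y; pose u := ucoord y; pose o := GRing.one R.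
pose K := (n%:R - 2) * eps / 2; pose mu := - u; pose c := - (GRing.one R).
have Er : forall t, rhobar eps (upd y i1 t) = b * t + mu.
  by move=> t; rewrite rhobarE u_upd v_upd eqxx i10 /b /mu /u; ring.
have Et : forall t, taufun (upd y i1 t) = o * t + u.
  by move=> t; rewrite taufunE u_upd v_upd eqxx i10 /o /u; ring.
have H1 : b * vcoord y + mu != 0.
  by move: Hr; rewrite rhobarE /b /mu /u; congr (_ != _); ring.
have H2 : o * vcoord y + u != 0.
  by move: Ht; rewrite taufunE /o /u; congr (_ != _); ring.
eapply (@pder_loc _ i1 (pder i0 (@wbar n m eps)) y (fun t : R => K * (c * t ^+ 2 / (b * t + mu) ^+ 2))).
  apply: filter_imp (filter_and _ _ (lin_loc H1) (lin_loc H2)) => t [Ht1 Ht2].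
  rewrite pder_w0 ?Er ?Et // /Wu Er v_upd eqxx /K /c.
  by rewrite mulN1r.
apply: dR_eq; first exact: dR_mul (dR_const K _) (dR_frac2 c H1).
by rewrite /= mul0r add0r /K /c /b /mu /u.
Qed.

Lemma d2w01 n m eps (y : 'I_(dimN n m) -> R) : (1 <= n)%N -> (1 <= m)%N ->
  rhobar eps y != 0 -> taufun y != 0 ->
  pder i0 (pder i1 (@wbar n m eps)) y =
  (n%:R - 2) * eps / 2 * (1 * (2 * ucoord y * ((-1 - 2 * eps * vcoord y) * ucoord y + vcoord y)
     - 2 * (-1 - 2 * eps * vcoord y) * ucoord y ^+ 2) / ((-1 - 2 * eps * vcoord y) * ucoord y + vcoord y) ^+ 3).
Proof.
move=> Hn Hm Hr Ht.
pose a := -1 - 2 * eps * vcoord y; pose v := vcoord y; pose o := GRing.one R.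
pose K := (n%:R - 2) * eps / 2.
have Er : forall t, rhobar eps (upd y i0 t) = a * t + v.
  by move=> t; rewrite rhobarE u_upd v_upd eqxx i01 /a /v; ring.
have Et : forall t, taufun (upd y i0 t) = o * t + v.
  by move=> t; rewrite taufunE u_upd v_upd eqxx i01 /o /v; ring.
have H1 : a * ucoord y + v != 0.
  by move: Hr; rewrite rhobarE /a /v; congr (_ != _); ring.
have H2 : o * ucoord y + v != 0.
  by move: Ht; rewrite taufunE /o /v; congr (_ != _); ring.
eapply (@pder_loc _ i0 (pder i1 (@wbar n m eps)) y (fun t : R => K * (o * t ^+ 2 / (a * t + v) ^+ 2))).
  apply: filter_imp (filter_and _ _ (lin_loc H1) (lin_loc H2)) => t [Ht1 Ht2].
  rewrite pder_w1 ?Er ?Et // /Wv Er u_upd eqxx /K /o.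
  by rewrite mul1r.
apply: dR_eq; first exact: dR_mul (dR_const K _) (dR_frac2 o H1).
by rewrite /= mul0r add0r /K /o /a /v.
Qed.

Lemma box_w n m eps (x : 'I_(dimN n m) -> R) : (1 <= n)%N -> (1 <= m)%N ->
  rhobar eps x != 0 -> taufun x != 0 ->
  box (gbar n m eps) (wbar eps) x =
    - ((n%:R - 2) * eps / (2 * rhobar eps x)) *
      ((n%:R - 3) * ffun x / rhobar eps x ^+ 2
       - (n%:R + m%:R - 2) * rfun x / (2 * rhobar eps x)).
Proof.
move=> Hn Hm Hr Ht.
rewrite box_gen //; first last.
- move=> k H0 H1; apply: (pder_const (c := 0)) => t.
  have Er : rhobar eps (upd x k t) = rhobar eps x by rewrite !rhobarE !u_upd !v_upd H0 H1.
  have Et : taufun (upd x k t) = taufun x by rewrite !taufunE !u_upd !v_upd H0 H1.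
  by rewrite pder_w_other ?Er ?Et.
- by move=> k H0 H1; rewrite pder_w_other.
rewrite d2w01 // d2w10 // pder_w0 // pder_w1 // /Wu /Wv !natr_pred // ffunE rfunE.
move: Hr Ht; rewrite rhobarE taufunE => Hr Ht.
have Hr1 : (1 - 2 * eps * ucoord x) * vcoord x + - ucoord x != 0.
  by move: Hr; congr (_ != _); ring.
have Hr2 : (-1 - 2 * eps * vcoord x) * ucoord x + vcoord x != 0.
  by move: Hr; congr (_ != _); ring.
move: Hr Ht Hr1 Hr2.
set u := ucoord x; set v := vcoord x; set N := n%:R; set M := m%:R => Hr Ht Hr1 Hr2.
field; by rewrite Hr Ht.
Qed.

Unset Implicit Arguments.
Theorem proposition3p7 (n m : nat) (eps : R) (x : 'I_(dimN n m) -> R) :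
  (1 <= n)%N -> (1 <= m)%N ->
  0 < taufun x -> 0 < rfun x ->
  0 < ffun x ->
  rhobar eps x != 0 ->
  let k := eps * ffun x / (2 * rhobar eps x) in
  let P := pibar eps x in
  (* components of pibar in the frame (T, N, d_{y_a}, d_{z_C}) *)
  (bil P (Tvec x) (Tvec x) = k /\
   bil P (Nvec x) (Nvec x) = - k /\
   bil P (Tvec x) (Nvec x) = 0 /\ bil P (Nvec x) (Tvec x) = 0 /\
   (forall a b : 'I_(dimN n m), isY a -> isY b ->
      P a b = k * gbar n m eps x a b) /\
   (forall C D : 'I_(dimN n m), isZ C -> isZ D ->
      P C D = - k * gbar n m eps x C D) /\
   (forall i : 'I_(dimN n m), isY i || isZ i ->
      bil P (Tvec x) (cvec i) = 0 /\ bil P (cvec i) (Tvec x) = 0 /\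
      bil P (Nvec x) (cvec i) = 0 /\ bil P (cvec i) (Nvec x) = 0) /\
   (forall a C : 'I_(dimN n m), isY a -> isZ C -> P a C = 0 /\ P C a = 0)) /\
  (* the formula for wbar = 1/2 box f - hbar *)
  wbar eps x = (n%:R + m%:R - 2) / 4 + (n%:R - 2) * eps * ffun x / (2 * rhobar eps x) /\
  (* the formula for box wbar *)
  box (gbar n m eps) (wbar eps) x =
    - ((n%:R - 2) * eps / (2 * rhobar eps x)) *
      ((n%:R - 3) * ffun x / rhobar eps x ^+ 2
       - (n%:R + m%:R - 2) * rfun x / (2 * rhobar eps x)).
Proof.
move=> Hn Hm Htau Hrf Hf Hr k P.
have Ht : taufun x != 0 by rewrite (gt_eqF Htau).
have Hf0 : ffun x != 0 by rewrite (gt_eqF Hf).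
have Hfs : Rlt 0 (ffun x) by apply/RltP.
have Hq : sqrt (ffun x) * sqrt (ffun x) = ffun x by apply: sqrt_sqrt; apply: Rlt_le.
have Hq0 : sqrt (ffun x) != 0.
  have /RltP H := sqrt_lt_R0 _ Hfs; by rewrite (gt_eqF H).
have HT : forall k0, (k0 == i0) = false -> (k0 == i1) = false -> Tvec x k0 = 0.
  by move=> k0 H0 H1; rewrite TvecE H0 H1.
have HN : forall k0, (k0 == i0) = false -> (k0 == i1) = false -> Nvec x k0 = 0.
  by move=> k0 H0 H1; rewrite NvecE H0 H1.
have E4 : - ucoord x / (2 * sqrt (ffun x)) * (vcoord x / (2 * sqrt (ffun x))) = 4^-1.
  have -> : - ucoord x / (2 * sqrt (ffun x)) * (vcoord x / (2 * sqrt (ffun x))) =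
     (- (ucoord x * vcoord x)) / (4 * (sqrt (ffun x) * sqrt (ffun x))).
    by move: Hq0; set q := sqrt (ffun x) => Hq0; field; rewrite Hq0.
  rewrite -ffunE Hq; field; by rewrite Hf0.
have E4' : ucoord x / (2 * sqrt (ffun x)) * (vcoord x / (2 * sqrt (ffun x))) = - 4^-1.
  by rewrite -E4; ring.
split; last split.
- have H01 := P01 Hr Ht; have H10 := P10 Hr Ht; have H00 := P00 Hr Ht; have H11 := P11 Hr Ht.
  have Hi0 : forall i : 'I_(dimN n m), isY i || isZ i -> (i == i0) = false /\ (i == i1) = false.
    by move=> i /orP[/isY_ne|/isZ_ne].
  split.
    rewrite /P bil01' // !TvecE !eqxx i10 H00 H01 H10 H11.
    set T0 := - ucoord x / _; set T1 := vcoord x / _.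
    set K := eps * ffun x / (2 * rhobar eps x).
    transitivity (4 * K * (T0 * T1)); first ring.
    by rewrite /T0 /T1 E4 /k /K; field.
  split.
    rewrite /P bil01' // !NvecE !eqxx i10 H00 H01 H10 H11.
    set T0 := ucoord x / _; set T1 := vcoord x / _.
    set K := eps * ffun x / (2 * rhobar eps x).
    transitivity (4 * K * (T0 * T1)); first ring.
    by rewrite /T0 /T1 E4' /k /K; field.
  split.
    rewrite /P bil01' // !NvecE !TvecE !eqxx i10 H00 H01 H10 H11; ring.
  split.
    rewrite /P bil01' // !NvecE !TvecE !eqxx i10 H00 H01 H10 H11; ring.
  split.
    by move=> a b Ha Hb; rewrite /P /k PY.
  split.
    by move=> a b Ha Hb; rewrite /P /k PZ.
  split.
    move=> i Hi; have [Hi0' Hi1'] := Hi0 i Hi.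
    have Pa : P i0 i = 0 by apply: Pzero_j; rewrite // pp0.
    have Pb : P i1 i = 0 by apply: Pzero_j; rewrite // pp1.
    have Pc : P i i0 = 0 by apply: Pzero_i; rewrite // ppE // eq_sym.
    have Pd : P i i1 = 0 by apply: Pzero_i; rewrite // ppE // eq_sym.
    rewrite !bil_cr !bil_cl !sum01; try (by move=> k0 H0 H1; rewrite ?HT ?HN // mulr0).
    by rewrite Pa Pb Pc Pd !mul0r addr0.
  move=> a C Ha HC; have [Ha0 Ha1] := isY_ne Ha; have [HC0 HC1] := isZ_ne HC.
  have HaC : (C == a) = false by apply/negP => /eqP E; rewrite E (isYZ Ha) in HC.
  split.
    by apply: Pzero_j; rewrite // ppE.
  by apply: Pzero_i; rewrite // ppE // eq_sym.
- exact: wbar_loc.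
- exact: box_w.
Qed.
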